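(* Let $x_1,\dots,x_N$ be training data points, let $f(x,\theta)$ be a loss function differentiable in the parameter $\theta$, and fix the current parameter $\theta_t$. Let $S_b \subseteq \{x_1,\dots,x_N\}$ be a random bucket (the set of data points sharing the query's hash value in the hash table probed), and, conditionally on $S_b$, let $x_m$ be an element chosen uniformly at random from $S_b$. For each $i$, let $p_i>0$ denote the probability that $x_i$ belongs to $S_b$. Define $$\mathrm{Est} = \frac{1}{N}\sum_{i=1}^N \mathbb{1}_{x_i\in S_b}\,\mathbb{1}_{(x_i = x_m \mid x_i\in S_b)}\,\frac{\nabla f(x_i,\theta_t)\cdot |S_b|}{p_i}.$$ Then $\mathrm{Est}$ is an unbiased estimator of the full gradient: $$\mathbb{E}[\mathrm{Est}] = \frac{1}{N}\sum_{i=1}^N \nabla f(x_i,\theta_t).$$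
   Context: This is the LSH-sampled gradient estimator (LGD). Data points are preprocessed into locality-sensitive hash tables; at iteration $t$ the query (built from $\theta_t$) is hashed, a hash table is probed, and the matching non-empty bucket is $S_b$. The paper writes the bucket-membership probability as $p_i = cp(x_i,\theta_t)^K\,(1-cp(x_i,\theta_t)^K)^{l-1}$, where $cp(x,\theta)=\Pr(h(x)=h(\theta))$ is the collision probability of the LSH function $h$, $K$ is the number of concatenated hash functions per table, and $l$ is the number of tables probed until a non-empty bucket was found; in the statement $p_i$ simply denotes $\Pr(x_i\in S_b)$. $\mathbb{1}_{(x_i = x_m\mid x_i\in S_b)}$ is the indicator that $x_i$ is the element selected from the bucket. *)

(* Defs.v *)
From HB Require Import structures.
From mathcomp Require Import all_boot all_order all_algebra.
From mathcomp Require Import all_classical all_reals all_analysis.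
Set Implicit Arguments. Unset Strict Implicit. Unset Printing Implicit Defensive.
Import Order.TTheory GRing.Theory Num.Theory.
Import numFieldNormedType.Exports.
Local Open Scope ring_scope.

Definition grad (R : realType) (d : nat) (g : 'rV[R]_d -> R) (theta : 'rV[R]_d)
  : 'rV[R]_d :=
  \row_(j < d) derive g theta (delta_mx 0 j).

(* Distribution of the bucket: PS S = Pr(S_b = S), S a subset of the indices.
   Inclusion probability p_i = Pr(x_i \in S_b). *)
Definition incl_prob (R : realType) (N : nat) (PS : {set 'I_N} -> R) (i : 'I_N) : R :=
  \sum_(S : {set 'I_N} | i \in S) PS S.

Definition joint (R : realType) (N : nat) (PS : {set 'I_N} -> R)
  (S : {set 'I_N}) (m : 'I_N) : R :=
  PS S * (if m \in S then (#|S|%:R)^-1 else 0).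

Definition Est (R : realType) (N d : nat) (gr : 'I_N -> 'rV[R]_d)
  (PS : {set 'I_N} -> R) (S : {set 'I_N}) (m : 'I_N) : 'rV[R]_d :=
  (N%:R)^-1 *: \sum_(i < N)
     (((i \in S)%:R * (i == m)%:R * #|S|%:R / incl_prob PS i) *: gr i).

Definition expect (R : realType) (N d : nat) (PS : {set 'I_N} -> R)
  (X : {set 'I_N} -> 'I_N -> 'rV[R]_d) : 'rV[R]_d :=
  \sum_(S : {set 'I_N}) \sum_(m < N) joint PS S m *: X S m.

(* Main.v *)
Require Import Defs.
From HB Require Import structures.
From mathcomp Require Import all_boot all_order all_algebra.
From mathcomp Require Import all_classical all_reals all_analysis.
From mathcomp Require Import ring.
Import Order.TTheory GRing.Theory Num.Theory.
Import numFieldNormedType.Exports.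
Local Open Scope ring_scope.

Lemma key (R : realType) (N d : nat) (gr : 'I_N -> 'rV[R]_d) (PS : {set 'I_N} -> R) :
  (forall i, incl_prob PS i != 0) ->
  expect PS (Est gr PS) = (N%:R)^-1 *: \sum_(i < N) gr i.
Proof.
move=> hp; rewrite /expect /Est.
under eq_bigr => S _ do under eq_bigr => m _ do
  rewrite scalerA mulrC -scalerA scaler_sumr.
under eq_bigr => S _ do rewrite -scaler_sumr.
rewrite -scaler_sumr; congr (_ *: _).
under eq_bigr => S _ do rewrite exchange_big /=.
rewrite exchange_big /=; apply: eq_bigr => i _.
under eq_bigr => S _ do under eq_bigr => m _ do rewrite scalerA.
under eq_bigr => S _ do rewrite -scaler_suml.
rewrite -scaler_suml.
match goal with |- ?a *: _ = _ => suff -> : a = 1 by rewrite scale1r end.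
have E : forall S : {set 'I_N}, \sum_(m < N)  (joint PS S m * ((i \in S)%:R * (i == m)%:R * #|S|%:R / incl_prob PS i))
   = (i \in S)%:R * PS S / incl_prob PS i.
  move=> S; rewrite (bigD1 i) //= big1 ?addr0; last first.
    by move=> m; rewrite eq_sym => /negbTE ->; rewrite mulr0 !mul0r mulr0.
  rewrite eqxx /joint; case: (boolP (i \in S)) => iS; last by rewrite !mul0r mulr0.
  have hS : (#|S|%:R : R) != 0 by rewrite pnatr_eq0 -lt0n; apply/card_gt0P; exists i.
  rewrite mulr1. field. by rewrite hp hS.
under eq_bigr => S _ do rewrite E.
have P : \sum_(S : {set 'I_N}) (i \in S)%:R * PS S = incl_prob PS i.
  rewrite /incl_prob [RHS]big_mkcond /=; apply: eq_bigr => S _.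
  by case: (i \in S); rewrite ?mul1r ?mul0r.
by rewrite -mulr_suml P divff.
Qed.

Theorem theorem1 (R : realType) (X : Type) (N d : nat)
  (x : 'I_N -> X) (f : X -> 'rV[R]_d -> R) (theta_t : 'rV[R]_d)
  (PS : {set 'I_N} -> R) :
  (forall i, differentiable (f (x i)) theta_t) ->
  (forall S, 0 <= PS S) ->
  \sum_(S : {set 'I_N}) PS S = 1 ->
  PS finset.set0 = 0 ->
  (forall i, 0 < incl_prob PS i) ->
  expect PS (Est (fun i => grad (f (x i)) theta_t) PS)
  = (N%:R)^-1 *: \sum_(i < N) grad (f (x i)) theta_t.
Proof.
move=> _ _ _ _ hp; apply: key => i; exact: lt0r_neq0.
Qed.
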